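(* Let $K_1,K_{-1}\subseteq[N]$ be disjoint, $x_{\pm1}=\mathbb{1}_{K_1}-\mathbb{1}_{K_{-1}}$, and $A\in\mathbb{R}^{m\times N}$. The following are equivalent: (i) $x_{\pm1}$ is the unique solution of $\min\|x\|_1$ subject to $Ax=Ax_{\pm1}$ and $x\in[-1,1]^N$; (ii) $\ker(A)\cap N_K\cap H_{K_1,K_{-1}}=\{0\}$, where $K=K_1\cup K_{-1}$.
   Context: $\mathbb{1}_S$ has entries $1$ on $S$ and $0$ elsewhere; $K^C=[N]\setminus K$; $w_S$ agrees with $w$ on $S$ and is zero elsewhere. $N_K=\{w\in\mathbb{R}^N:\|w_K\|_1\ge\|w_{K^C}\|_1\}$ and $H_{K_1,K_{-1}}=\{w\in\mathbb{R}^N: w_i\le 0\text{ for } i\in K_1,\ w_i\ge0\text{ for } i\in K_{-1}\}$. ''Unique solution'' means unique minimizer. *)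

(* Defs.v *)
From mathcomp Require Import all_boot all_order all_algebra.
Set Implicit Arguments. Unset Strict Implicit. Unset Printing Implicit Defensive.
Import Order.TTheory GRing.Theory Num.Theory.
Local Open Scope ring_scope.

Definition l1_on (R : numDomainType) (N : nat) (S : {set 'I_N}) (w : 'cV[R]_N) : R :=
  \sum_(i in S) `|w i 0|.

Definition l1 (R : numDomainType) (N : nat) (w : 'cV[R]_N) : R :=
  \sum_i `|w i 0|.

Definition indic (R : numDomainType) (N : nat) (S : {set 'I_N}) : 'cV[R]_N :=
  \col_i (if i \in S then 1 else 0).

Definition xpm1 (R : numDomainType) (N : nat) (K1 Km1 : {set 'I_N}) : 'cV[R]_N :=
  indic R K1 - indic R Km1.

Definition in_ker (R : numDomainType) (m N : nat) (A : 'M[R]_(m, N)) (w : 'cV[R]_N) : Prop :=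
  A *m w = 0.

Definition in_NK (R : numDomainType) (N : nat) (K : {set 'I_N}) (w : 'cV[R]_N) : Prop :=
  l1_on (~: K) w <= l1_on K w.

Definition in_H (R : numDomainType) (N : nat) (K1 Km1 : {set 'I_N}) (w : 'cV[R]_N) : Prop :=
  (forall i, i \in K1 -> w i 0 <= 0) /\ (forall i, i \in Km1 -> 0 <= w i 0).

Definition feasible (R : numDomainType) (m N : nat) (A : 'M[R]_(m, N)) (b : 'cV[R]_m)
  (z : 'cV[R]_N) : Prop :=
  A *m z = b /\ (forall i, -1 <= z i 0 <= 1).

Definition unique_box_l1_min (R : numDomainType) (m N : nat) (A : 'M[R]_(m, N))
  (b : 'cV[R]_m) (x : 'cV[R]_N) : Prop :=
  feasible A b x /\
  (forall z, feasible A b z -> l1 x <= l1 z) /\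
  (forall z, feasible A b z -> (forall z', feasible A b z' -> l1 z <= l1 z') -> z = x).

(* Main.v *)
Require Import Defs.
From mathcomp Require Import all_boot all_order all_algebra.
From mathcomp Require Import lra.
Import Order.TTheory GRing.Theory Num.Theory.
Local Open Scope ring_scope.

Section Aux.
Variables (R : realFieldType) (N : nat).

Lemma sum_split (K : {set 'I_N}) (f : 'I_N -> R) :
  \sum_i f i = \sum_(i in K) f i + \sum_(i in ~: K) f i.
Proof.
rewrite (bigID (mem K)) /=; congr (_ + _).
by apply: eq_bigl => i; rewrite in_setC.
Qed.

Lemma l1_lb (K : {set 'I_N}) (x w : 'cV[R]_N) :
  (forall i, i \notin K -> x i 0 = 0) ->
  l1 x - l1_on K w + l1_on (~: K) w <= l1 (x + w).
Proof.
move=> hx; rewrite /l1 /l1_on (sum_split K) (sum_split K (fun i => `|(x + w) i 0|)).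
have -> : \sum_(i in ~: K) `|x i 0| = 0.
  by apply: big1 => i; rewrite in_setC => /hx ->; rewrite normr0.
have -> : \sum_(i in ~: K) `|(x + w) i 0| = \sum_(i in ~: K) `|w i 0|.
  by apply: eq_bigr => i; rewrite in_setC mxE => /hx ->; rewrite add0r.
rewrite addr0 lerD2r -sumrB; apply: ler_sum => i _; rewrite mxE.
exact: lerB_normD.
Qed.

Lemma l1_on_scale (S : {set 'I_N}) (t : R) (w : 'cV[R]_N) : 0 <= t ->
  l1_on S (t *: w) = t * l1_on S w.
Proof.
move=> ht; rewrite /l1_on mulr_sumr; apply: eq_bigr => i _.
by rewrite mxE normrM (ger0_norm ht).
Qed.

Lemma xpm1E (K1 Km1 : {set 'I_N}) i : [disjoint K1 & Km1] ->
  xpm1 R K1 Km1 i 0 = if i \in K1 then 1 else if i \in Km1 then -1 else 0.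
Proof.
move=> hd; rewrite /xpm1 /indic !mxE.
case: (boolP (i \in K1)) => h1.
  by rewrite (disjointFr hd h1) subr0.
by case: (i \in Km1); rewrite ?sub0r ?oppr0.
Qed.

End Aux.

Theorem theorem3p2 (R : realFieldType) (m N : nat) (K1 Km1 : {set 'I_N})
  (A : 'M[R]_(m, N)) :
  [disjoint K1 & Km1] ->
  (unique_box_l1_min A (A *m xpm1 R K1 Km1) (xpm1 R K1 Km1) <->
   (forall w : 'cV[R]_N,
      in_ker A w -> in_NK (K1 :|: Km1) w -> in_H K1 Km1 w -> w = 0)).
Proof.
move=> hd; set x := xpm1 R K1 Km1; set K := K1 :|: Km1.
have hx0 : forall i, i \notin K -> x i 0 = 0.
  move=> i; rewrite /x xpm1E // !inE negb_or => /andP[/negbTE -> /negbTE ->].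
  done.
split.
- move=> [hfx [hmin huniq]] w hker hNK [hH1 hH2].
  have l1ge : forall i, `|w i 0| <= l1 w.
    move=> i; rewrite /l1 (bigD1 i) //= lerDl; apply: sumr_ge0 => j _.
    exact: normr_ge0.
  have l1w0 : 0 <= l1 w by apply: sumr_ge0 => j _; exact: normr_ge0.
  set t := (1 + l1 w)^-1.
  have ht : 0 < t by rewrite invr_gt0; lra.
  have tl : t * l1 w <= 1.
    by rewrite mulrC ler_pdivrMr ?mul1r; lra.
  set v := t *: w.
  have vE : forall i, v i 0 = t * w i 0 by move=> i; rewrite mxE.
  have hv : forall i, -1 <= v i 0 <= 1.
    move=> i; rewrite -ler_norml vE normrM (gtr0_norm ht).
    apply: le_trans tl; apply: ler_wpM2l; [exact: ltW | exact: l1ge].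
  have hv1 : forall i, i \in K1 -> v i 0 <= 0.
    by move=> i /hH1 h; rewrite vE mulr_ge0_le0 // ltW.
  have hv2 : forall i, i \in Km1 -> 0 <= v i 0.
    by move=> i /hH2 h; rewrite vE mulr_ge0 // ltW.
  have hfz : feasible A (A *m x) (x + v).
    split.
      by rewrite mulmxDr /v -scalemxAr hker scaler0 addr0.
    move=> i; rewrite mxE /x xpm1E //.
    have := hv i; case/andP=> a b.
    case: (boolP (i \in K1)) => h1.
      by have c := hv1 i h1; apply/andP; split; lra.
    case: (boolP (i \in Km1)) => h2.
      by have c := hv2 i h2; apply/andP; split; lra.
    by rewrite add0r; apply/andP.
  have eqK : forall i, i \in K -> `|(x + v) i 0| = `|x i 0| - `|v i 0|.
    move=> i; rewrite mxE /x xpm1E // !inE; case/orP=> h.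
      rewrite h; have := hv1 i h; have := hv i; case/andP=> a b c.
      by rewrite normr1 (ler0_norm c) ger0_norm; lra.
    rewrite h (disjointFl hd h); have := hv2 i h; have := hv i; case/andP=> a b c.
    by rewrite normrN1 (ger0_norm c) ler0_norm; lra.
  have hle : l1 (x + v) <= l1 x.
    rewrite /l1 (@sum_split _ _ K) (@sum_split _ _ K (fun i => `|x i 0|)).
    have -> : \sum_(i in ~: K) `|x i 0| = 0.
      by apply: big1 => i; rewrite in_setC => /hx0 ->; rewrite normr0.
    have -> : \sum_(i in ~: K) `|(x + v) i 0| = l1_on (~: K) v.
      by apply: eq_bigr => i; rewrite in_setC mxE => /hx0 ->; rewrite add0r.
    rewrite (eq_bigr _ eqK) sumrB addr0 -/(l1_on K v).
    have : l1_on (~: K) v <= l1_on K v.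
      rewrite /v !l1_on_scale ?(ltW ht) //. apply: ler_wpM2l; [exact: ltW | exact: hNK].
    lra.
  have hxv := huniq (x + v) hfz (fun z' hz' => le_trans hle (hmin z' hz')).
  have v0 : v = 0 by apply: (addrI x); rewrite hxv addr0.
  have -> : w = t^-1 *: v by rewrite /v scalerA mulVf ?scale1r // gt_eqF.
  by rewrite v0 scaler0.
- move=> hH.
  have key : forall z, feasible A (A *m x) z -> z = x \/ l1 x < l1 z.
    move=> z [hAz hbox]; set w := z - x.
    have hz : z = x + w by rewrite /w addrC subrK.
    have hker : in_ker A w by rewrite /in_ker mulmxBr hAz subrr.
    have hHw : in_H K1 Km1 w.
      split=> i h; (have wE : w i 0 = z i 0 - x i 0 by rewrite !mxE);
        rewrite wE /x xpm1E //.
        by rewrite h; have := hbox i; case/andP=> a b; lra.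
      by rewrite (disjointFl hd h) h; have := hbox i; case/andP=> a b; lra.
    case: (leP (l1_on (~: K) w) (l1_on K w)) => h.
      by left; rewrite hz (hH w hker h hHw) addr0.
    by right; have := @l1_lb _ _ K x w hx0; rewrite -hz; lra.
  have hfx : feasible A (A *m x) x.
    split=> // i; rewrite /x xpm1E //.
    by case: (i \in K1); case: (i \in Km1); apply/andP; split; lra.
  split=> //; split.
    by move=> z /key [-> | /ltW].
  move=> z /key [-> // | h] hmin.
  by have := hmin x hfx; rewrite leNgt h.
Qed.
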